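(* Fix $\theta$ with $\phi(\theta)<\beta$ and $Q\in\{0,1\}$, and suppose $\tau_1^d(\theta)\neq\tau_2^d(\theta)$. For every $\tau$ strictly between $\tau_1^d(\theta)$ and $\tau_2^d(\theta)$, we have $s_1(\theta,\tau)>s_2(\theta,\tau)$ if and only if $u(s_2(\theta,\tau))<u(s_1(\theta,\tau))$ (i.e., the firm prefers $s_2$ to $s_1$).
   Context: Setup. Let $Q\in\{0,1\}$ be a random variable with $\mathbb P(Q=1)=\pi\in(0,1)$, and let $(\Theta,\Gamma)$ be a real-valued random vector whose conditional joint density given $Q=1$ is $h_q$ and given $Q=0$ is $h_u$, both strictly positive on $\mathbb R^2$. Monotone likelihood ratio assumption: $l(\theta,\gamma)=h_q(\theta,\gamma)/h_u(\theta,\gamma)$ is continuous and strictly increasing in each of $\theta$ and $\gamma$, and for each $\theta$ the map $\gamma\mapsto l(\theta,\gamma)$ has infimum $0$ and supremum $+\infty$. Fix payoffs $x_q>0$, $x_u>0$. For $\tau\in(-x_u,x_q)$ let $A(\tau)=\mathbb 1\{l(\Theta,\Gamma)>\frac{(1-\pi)(x_u+\tau)}{\pi(x_q-\tau)}\}$, $s_1(\theta,\tau)=\mathbb E[Q\mid\Theta=\theta,A(\tau)=1]$, $s_2(\theta,\tau)=\mathbb E[A(\tau)\mid\Theta=\theta]$, $\phi(\theta)=\mathbb P(Q=1\mid\Theta=\theta)$. Regret. Fix a cutoff $c\in(-x_u,x_q)$ and let $\beta=(x_u+c)/(x_q+x_u)\in(0,1)$. For a score value $s\in[0,1]$ and a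 qualification value $Q\in\{0,1\}$ define $\mathcal N(s)=sx_q-(1-s)x_u$, $A'(s)=\mathbb 1\{\mathcal N(s)>c\}$ (i.e. $s>\beta$), $\mathcal P(s)=A'(s)(Qx_q-(1-Q)x_u)$, and the individual regret $u(s)=\mathcal N(s)-\mathcal P(s)$. The critical prejudice $\tau_k^d(\theta)$, $k=1,2$, is the unique $\tau\in(-x_u,x_q)$ with $s_k(\theta,\tau)=\beta$ (it exists for $k=1$ when $\phi(\theta)<\beta$, and always for $k=2$). The firm prefers $s$ to $s'$ at $(\theta,\tau)$ if $u(s(\theta,\tau))<u(s'(\theta,\tau))$. *)

(* Defs.v *)
From HB Require Import structures.
From mathcomp Require Import all_boot all_order all_algebra.
From mathcomp Require Import all_classical all_reals all_analysis.
Set Implicit Arguments. Unset Strict Implicit. Unset Printing Implicit Defensive.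
Import Order.TTheory GRing.Theory Num.Theory.
Import numFieldNormedType.Exports.
Local Open Scope classical_set_scope.
Local Open Scope ring_scope.

Section Defs.
Variable R : realType.

Definition gint (f : R -> R) : R := Rintegral (@lebesgue_measure R) setT f.

Definition lr (hq hu : R -> R -> R) (th g : R) : R := hq th g / hu th g.

Definition thr (pi xq xu tau : R) : R :=
  ((1 - pi) * (xu + tau)) / (pi * (xq - tau)).

(* A(tau) on the event (Theta,Gamma) = (th,g) *)
Definition Aind (hq hu : R -> R -> R) (pi xq xu tau th g : R) : R :=
  if lr hq hu th g > thr pi xq xu tau then 1 else 0.

(* phi(th) = P(Q=1 | Theta = th) *)
Definition phi (hq hu : R -> R -> R) (pi th : R) : R :=
  (pi * gint (fun g => hq th g)) /
  gint (fun g => pi * hq th g + (1 - pi) * hu th g).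

(* s_1(th,tau) = E[Q | Theta = th, A(tau) = 1] *)
Definition s1 (hq hu : R -> R -> R) (pi xq xu th tau : R) : R :=
  gint (fun g => pi * hq th g * Aind hq hu pi xq xu tau th g) /
  gint (fun g => (pi * hq th g + (1 - pi) * hu th g) * Aind hq hu pi xq xu tau th g).

(* s_2(th,tau) = E[A(tau) | Theta = th] *)
Definition s2 (hq hu : R -> R -> R) (pi xq xu th tau : R) : R :=
  gint (fun g => (pi * hq th g + (1 - pi) * hu th g) * Aind hq hu pi xq xu tau th g) /
  gint (fun g => pi * hq th g + (1 - pi) * hu th g).

Definition beta (xq xu c : R) : R := (xu + c) / (xq + xu).

Definition Nv (xq xu s : R) : R := s * xq - (1 - s) * xu.

Definition Aprime (xq xu c s : R) : R := if Nv xq xu s > c then 1 else 0.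

(* P(s) = A'(s) (Q x_q - (1-Q) x_u), Q in {0,1} encoded as a bool *)
Definition Pv (xq xu c : R) (Q : bool) (s : R) : R :=
  Aprime xq xu c s * ((Q%:R) * xq - (1 - Q%:R) * xu).

Definition regret (xq xu c : R) (Q : bool) (s : R) : R :=
  Nv xq xu s - Pv xq xu c Q s.

End Defs.

(* Main.v *)
Require Import Defs.
From HB Require Import structures.
From mathcomp Require Import all_boot all_order all_algebra.
From mathcomp Require Import all_classical all_reals all_analysis.
From mathcomp Require Import measurable_realfun lra ring.
Set Implicit Arguments. Unset Strict Implicit. Unset Printing Implicit Defensive.
Import Order.TTheory GRing.Theory Num.Theory.
Import numFieldNormedType.Exports.
Local Open Scope classical_set_scope.
Local Open Scope ring_scope.

Lemma cont_sec (R : realType) (F : R -> R -> R) (th : R) :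
  continuous (fun z : R * R => F z.1 z.2) -> continuous (F th).
Proof.
move=> H x.
have -> : F th = (fun z : R * R => F z.1 z.2) \o (fun g => (th, g)) by [].
apply: (@continuous_comp _ _ _ (fun g => (th, g))); last exact: H.
exact: (cvg_pair (cvg_cst th) cvg_id).
Qed.

Lemma ivt_l (R : realType) (l : R -> R) :
  continuous l -> {homo l : a b / a < b} ->
  (forall e, 0 < e -> exists g, l g < e) -> (forall M, exists g, M < l g) ->
  forall v, 0 < v -> exists g, l g = v.
Proof.
move=> lc li linf lsup v v0.
have [a la] := linf v v0; have [b lb] := lsup v.
have ab : a <= b.
  rewrite leNgt; apply/negP => /li.
  by rewrite ltNge (ltW (lt_trans la lb)).
have lab : l a <= l b by apply/ltW/(lt_trans la lb).
have : Num.min (l a) (l b) <= v <= Num.max (l a) (l b) by rewrite (min_l lab) (max_r lab) (ltW la) (ltW lb).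
by case/(IVT ab (continuous_subspaceT lc)) => c _ <-; exists c.
Qed.

Lemma pos_int d (T : measurableType d) (R : realType)
  (mu : {measure set T -> \bar R}) (f : T -> R) (U : set T) :
  measurable U -> (0 < mu U)%E ->
  mu.-integrable U (EFin \o f) ->
  (forall x, U x -> 0 < f x) -> 0 < Rintegral mu U f.
Proof.
move=> mU U0 fi fpos.
have fin := integrable_fin_num mU fi.
rewrite lt0r Rintegral_ge0 ?andbT; last by move=> x /fpos /ltW.
apply/negP => /eqP H0.
have I0 : (\int[mu]_(x in U) `|(f x)%:E| = 0)%E.
  rewrite (eq_integral (fun x => (f x)%:E)); last first.
    by move=> x /set_mem Ux; rewrite gee0_abs// lee_fin ltW// fpos.
  by rewrite -(fineK fin) /=; move: H0; rewrite /Rintegral => ->.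
have mf := measurable_int mu fi.
have := (ae_eq_integral_abs mu mU mf).1 I0.
case=> N [mN N0 sub].
have UN : U `<=` N.
  move=> x Ux; apply: sub => /= h.
  by have := fpos x Ux; rewrite (EFin_inj (h Ux)) ltxx.
have := le_measure mu (mem_set mU) (mem_set mN) UN.
move=> h; have := lt_le_trans U0 h.
by move: N0 => /= ->; rewrite ltxx.
Qed.

Definition good (R : realType) (a b l : R -> R) :=
  [/\ (forall g, 0 < a g), (forall g, 0 < b g),
      (@lebesgue_measure R).-integrable setT (fun g => (a g)%:E) &
      (@lebesgue_measure R).-integrable setT (fun g => (b g)%:E)] /\
  [/\ (forall g, l g = a g / b g), continuous l, {homo l : x y / x < y},
      (forall e, 0 < e -> exists g, l g < e) & (forall M, exists g, M < l g)].

Definition Sup (R : realType) (l : R -> R) t := [set g | t < l g].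

Lemma mSup (R : realType) (l : R -> R) t : continuous l ->
  measurable (Sup l t).
Proof.
move=> lc; apply: open_measurable.
have -> : Sup l t = l @^-1` [set x | x > t] by [].
by apply: open_comp; [move=> x _; exact: lc|exact: open_gt].
Qed.

Lemma intS (R : realType) (f : R -> R) (S : set R) : measurable S ->
  (@lebesgue_measure R).-integrable setT (fun g => (f g)%:E) ->
  (@lebesgue_measure R).-integrable S (EFin \o f).
Proof. by move=> mS H; apply: (integrableS measurableT _ _ H) => //; exact: mS. Qed.

Lemma muI (R : realType) (a b : R) : a < b -> (0 < (@lebesgue_measure R) `[a, b])%E.
Proof. move=> ab. by rewrite lebesgue_measure_itv /= lte_fin ab -EFinD lte_fin subr_gt0. Qed.

Lemma homo_le (R : realType) (l : R -> R) : {homo l : x y / x < y} ->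
  forall x y, l x < l y -> x < y.
Proof.
move=> li x y lxy; rewrite ltNge; apply/negP; rewrite le_eqVlt => /orP[/eqP E|/li h].
  by move: lxy; rewrite E ltxx.
by have := lt_trans lxy h; rewrite ltxx.
Qed.

Lemma homo_lee (R : realType) (l : R -> R) : {homo l : x y / x < y} ->
  forall x y, x <= y -> l x <= l y.
Proof.
by move=> li x y; rewrite le_eqVlt => /orP[/eqP->//|/li/ltW].
Qed.

Lemma intLin d (T : measurableType d) (R : realType)
  (mu : {measure set T -> \bar R}) (D : set T) (f g : T -> R) (p q : R) :
  measurable D ->
  mu.-integrable D (fun x => (f x)%:E) -> mu.-integrable D (fun x => (g x)%:E) ->
  mu.-integrable D (fun x => (p * f x + q * g x)%:E).
Proof.
move=> mD fi gi.
have := integrableD mD (integrableZl mD p fi) (integrableZl mD q gi).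
by apply: (eq_integrable mD) => x _ /=; rewrite EFinD !EFinM.
Qed.

Lemma key (R : realType) (a b l : R -> R) (t t' : R) : good a b l -> 0 < t -> t < t' ->
  let F f s := Rintegral (@lebesgue_measure R) (Sup l s) f in
  0 < F a t - F a t' /\ 0 < F b t - F b t' /\ 0 < F a t' /\ 0 < F b t' /\
  F a t - F a t' <= t' * (F b t - F b t') /\ t' * F b t' < F a t'.
Proof.
case=> [[apos bpos ai bi] [le lc li linf lsup]] t0 tt' F.
pose B := [set g | t < l g /\ l g <= t'].
have eB : B = Sup l t `&` ~` Sup l t'.
  apply/seteqP; split => g /=; rewrite /Sup /=.
    by move=> [h1 h2]; split => //; apply/negP; rewrite -leNgt.
  by move=> [h1 /negP h2]; split => //; rewrite leNgt.
have mB : measurable B by rewrite eB; apply: measurableI; [exact: mSup|apply: measurableC; exact: mSup].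
have mS s : measurable (Sup l s) by exact: mSup.
have eU : Sup l t = Sup l t' `|` B.
  apply/seteqP; split => g /=; rewrite /Sup /B /=.
    by move=> h; case: (ltP t' (l g)) => h'; [left|right].
  by case=> [h|[]//]; apply: lt_trans h.
have dj : [disjoint Sup l t' & B].
  by apply/disj_setPS => g [/= h1 [_ h2]]; move: (lt_le_trans h1 h2); rewrite ltxx.
have Fsplit f : (@lebesgue_measure R).-integrable setT (fun g => (f g)%:E) ->
    F f t - F f t' = Rintegral (@lebesgue_measure R) B f.
  move=> fi; rewrite /F eU Rintegral_setU //; first by rewrite addrAC subrr add0r.
  - exact: mS.
  - by rewrite -eU; apply: intS.
have muB : (0 < (@lebesgue_measure R) B)%E.
  have [g1 e1] : exists g, l g = (t + t') / 2 by apply: ivt_l => //; lra.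
  have [g2 e2] : exists g, l g = t' by apply: ivt_l => //; lra.
  have g12 : g1 < g2 by apply: (homo_le li); rewrite e1 e2; lra.
  apply: (lt_le_trans (muI g12)); apply: le_measure; rewrite ?inE //.
  move=> g /=; rewrite in_itv /= => /andP[h1 h2]; split.
    by apply: (lt_le_trans _ (homo_lee li h1)); rewrite e1; lra.
  by rewrite -e2; apply: homo_lee.
have muS : (0 < (@lebesgue_measure R) (Sup l t'))%E.
  have [g3 e3] := lsup t'.
  have g34 : g3 < g3 + 1 by lra.
  apply: (lt_le_trans (muI g34)); apply: le_measure.
  - by rewrite inE; exact: measurable_itv.
  - by rewrite inE; exact: mS.
  move=> g /=; rewrite in_itv /= => /andP[h1 h2].
  by apply: (lt_le_trans e3); apply: homo_lee.
split; first by rewrite Fsplit //; apply: pos_int => //; exact: intS.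
split; first by rewrite Fsplit //; apply: pos_int => //; exact: intS.
split; first by apply: pos_int => //; [exact: mS|exact: intS].
split; first by apply: pos_int => //; [exact: mS|exact: intS].
split.
  rewrite !Fsplit // -RintegralZl //; last exact: intS.
  apply: le_Rintegral => //; [exact: intS| |].
    apply: intS => //.
    have := intLin t' 0 measurableT bi bi.
    by apply: (eq_integrable measurableT) => x _ /=; rewrite mul0r addr0.
  move=> x [_ h]; have := bpos x; move: h; rewrite le => h bx.
  by rewrite -ler_pdivrMr.
rewrite /F -RintegralZl //; last exact: intS.
have iab : (@lebesgue_measure R).-integrable setT (fun x => (1 * a x + (- t') * b x)%:E).
  exact: intLin.
have itb : (@lebesgue_measure R).-integrable setT (fun x => (t' * b x)%:E).
  have := intLin t' 0 measurableT bi bi.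
  by apply: (eq_integrable measurableT) => x _ /=; rewrite mul0r addr0.
rewrite -subr_gt0 -RintegralB //; try exact: mS; try (apply: intS => //; exact: mS).
apply: pos_int => //.
- exact: mS.
- apply: (@intS R (fun x => a x - t' * b x)); first exact: mS.
  by apply: (eq_integrable measurableT) iab => x _ /=; rewrite mul1r mulNr.
move=> x; rewrite /Sup /= le => h; have := bpos x => bx.
by rewrite subr_gt0 -ltr_pdivlMr.
exact: mS.
Qed.

Lemma gintS (R : realType) (f : R -> R) (S : set R) (P : R -> bool) (k : R) :
  measurable S ->
  (@lebesgue_measure R).-integrable setT (fun g => (f g)%:E) ->
  (forall g, P g <-> S g) ->
  Rintegral (@lebesgue_measure R) setT (fun g => k * f g * (if P g then 1 else 0)) =
  k * Rintegral (@lebesgue_measure R) S f.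
Proof.
move=> mS fi hP.
rewrite -RintegralZl //; last exact: intS.
rewrite [RHS]Rintegral_mkcond; apply: eq_Rintegral => x _.
rewrite patchE; case: (boolP (x \in S)) => h; case: ifPn => hp.
- by rewrite mulr1.
- by case/negP: hp; apply/hP; rewrite inE in h.
- by case/negP: h; rewrite inE; apply/hP.
- by rewrite mulr0.
Qed.

Lemma linS (R : realType) (a b : R -> R) (S : set R) (p q : R) :
  measurable S ->
  (@lebesgue_measure R).-integrable setT (fun g => (a g)%:E) ->
  (@lebesgue_measure R).-integrable setT (fun g => (b g)%:E) ->
  Rintegral (@lebesgue_measure R) S (fun g => p * a g + q * b g) =
  p * Rintegral (@lebesgue_measure R) S a + q * Rintegral (@lebesgue_measure R) S b.
Proof.
move=> mS ai bi.
have ai' := intLin p 0 measurableT ai ai.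
have bi' := intLin q 0 measurableT bi bi.
rewrite RintegralD //; last 2 first.
- by apply: (@intS R (fun x => p * a x)) => //; apply: (eq_integrable measurableT) ai' => x _ /=; rewrite mul0r addr0.
- by apply: (@intS R (fun x => q * b x)) => //; apply: (eq_integrable measurableT) bi' => x _ /=; rewrite mul0r addr0.
by rewrite !RintegralZl //; exact: intS.
Qed.

Lemma thr_mono (R : realType) (pi xq xu tau tau' : R) : 0 < pi < 1 ->
  - xu < tau -> tau < tau' -> tau' < xq ->
  0 < thr pi xq xu tau < thr pi xq xu tau'.
Proof.
move=> /andP[p0 p1] h1 h2 h3; rewrite /thr; apply/andP; split.
  apply: divr_gt0; apply: mulr_gt0; lra.
rewrite ltr_pdivrMr; last (apply: mulr_gt0; lra).
rewrite mulrAC ltr_pdivlMr; last (apply: mulr_gt0; lra).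
rewrite -subr_gt0.
have -> : (1 - pi) * (xu + tau') * (pi * (xq - tau)) - (1 - pi) * (xu + tau) * (pi * (xq - tau')) = ((1 - pi) * pi) * ((xq + xu) * (tau' - tau)) by ring.
by apply: mulr_gt0; apply: mulr_gt0; lra.
Qed.

Lemma Nv_gt (R : realType) (xq xu c s : R) : 0 < xq -> 0 < xu ->
  (c < Nv xq xu s) = (beta xq xu c < s).
Proof.
move=> hq hu; rewrite /Nv /beta ltr_pdivrMr; last by lra.
apply/idP/idP => h; lra.
Qed.

Lemma final (R : realType) (xq xu c : R) (Q : bool) (s s' : R) :
  0 < xq -> 0 < xu ->
  (beta xq xu c < s /\ beta xq xu c < s') \/ (s < beta xq xu c /\ s' < beta xq xu c) ->
  (s' < s <-> regret xq xu c Q s' < regret xq xu c Q s).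
Proof.
move=> hq hu H.
have e : Aprime xq xu c s = Aprime xq xu c s'.
  rewrite /Aprime !Nv_gt //.
  by case: H => -[h1 h2]; rewrite ?h1 ?h2 // !ltNge ?(ltW h1) ?(ltW h2).
rewrite /regret /Pv e /Nv.
set K := Aprime _ _ _ _ * _.
split => h; nra.
Qed.

Lemma alg1 (R : realType) (pi t' A0 A1 B0 B1 : R) : 0 < pi < 1 ->
  0 < A0 - A1 -> 0 < B0 - B1 -> 0 < A1 -> 0 < B1 ->
  A0 - A1 <= t' * (B0 - B1) -> t' * B1 < A1 ->
  pi * A0 / (pi * A0 + (1 - pi) * B0) < pi * A1 / (pi * A1 + (1 - pi) * B1).
Proof.
move=> /andP[p0 p1] hA hB a1 b1 h1 h2.
have d0 : 0 < pi * A0 + (1 - pi) * B0 by nra.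
have d1 : 0 < pi * A1 + (1 - pi) * B1 by nra.
rewrite ltr_pdivrMr // mulrAC ltr_pdivlMr //.
have k : (A0 - A1) * B1 - A1 * (B0 - B1) < 0.
  have : (A0 - A1) * B1 <= t' * (B0 - B1) * B1 by rewrite ler_pM2r.
  have : t' * B1 * (B0 - B1) < A1 * (B0 - B1) by rewrite ltr_pM2r.
  lra.
have pp : 0 < pi * (1 - pi) by nra.
rewrite -subr_gt0.
have -> : pi * A1 * (pi * A0 + (1 - pi) * B0) - pi * A0 * (pi * A1 + (1 - pi) * B1)
  = pi * (1 - pi) * - ((A0 - A1) * B1 - A1 * (B0 - B1)) by ring.
by apply: mulr_gt0 => //; rewrite oppr_gt0.
Qed.

Lemma alg2 (R : realType) (pi A0 A1 B0 B1 D : R) : 0 < pi < 1 ->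
  0 < A0 - A1 -> 0 < B0 - B1 -> 0 < D ->
  (pi * A1 + (1 - pi) * B1) / D < (pi * A0 + (1 - pi) * B0) / D.
Proof.
move=> /andP[p0 p1] hA hB d; rewrite ltr_pM2r ?invr_gt0 //; nra.
Qed.

Theorem mainTheorem13 (R : realType) (hq hu : R -> R -> R) (pi xq xu c : R)
  (* Q ~ Bernoulli(pi) with pi in (0,1) *)
  (Hpi : 0 < pi < 1)
  (* h_q, h_u: strictly positive joint densities on R^2 *)
  (Hhq_pos : forall th g, 0 < hq th g)
  (Hhu_pos : forall th g, 0 < hu th g)
  (Hhq_meas : measurable_fun setT (fun z : R * R => hq z.1 z.2))
  (Hhu_meas : measurable_fun setT (fun z : R * R => hu z.1 z.2))
  (Hhq_dens : (\int[(@lebesgue_measure R) \x (@lebesgue_measure R)]_z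
                 (hq z.1 z.2)%:E = 1)%E)
  (Hhu_dens : (\int[(@lebesgue_measure R) \x (@lebesgue_measure R)]_z
                 (hu z.1 z.2)%:E = 1)%E)
  (* the conditional densities given Theta = th are well defined *)
  (Hhq_sec : forall th, (@lebesgue_measure R).-integrable setT
                          (fun g => (hq th g)%:E))
  (Hhu_sec : forall th, (@lebesgue_measure R).-integrable setT
                          (fun g => (hu th g)%:E))
  (* monotone likelihood ratio assumption on l = h_q / h_u *)
  (Hl_cont : continuous (fun z : R * R => lr hq hu z.1 z.2))
  (Hl_inc_th : forall g, {homo (fun th => lr hq hu th g) : a b / a < b})
  (Hl_inc_g : forall th, {homo (fun g => lr hq hu th g) : a b / a < b})
  (Hl_inf : forall th e, 0 < e -> exists g, lr hq hu th g < e)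
  (Hl_sup : forall th M, exists g, M < lr hq hu th g)
  (* payoffs and cutoff *)
  (Hxq : 0 < xq) (Hxu : 0 < xu) (Hc : - xu < c < xq)
  (th : R) (Hphi : phi hq hu pi th < beta xq xu c)
  (Q : bool)
  (* tau1 = tau_1^d(th), tau2 = tau_2^d(th): the critical prejudices *)
  (tau1 tau2 : R)
  (Htau1 : - xu < tau1 < xq) (Hs1 : s1 hq hu pi xq xu th tau1 = beta xq xu c)
  (Htau2 : - xu < tau2 < xq) (Hs2 : s2 hq hu pi xq xu th tau2 = beta xq xu c)
  (Hneq : tau1 != tau2)
  (tau : R) (Htau : Num.min tau1 tau2 < tau < Num.max tau1 tau2) :
  s2 hq hu pi xq xu th tau < s1 hq hu pi xq xu th tau <->
  regret xq xu c Q (s2 hq hu pi xq xu th tau) <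
  regret xq xu c Q (s1 hq hu pi xq xu th tau).

Proof.
pose a := hq th; pose b := hu th; pose l := fun g => lr hq hu th g.
have G : good a b l.
  split; split.
  - exact: Hhq_pos.
  - exact: Hhu_pos.
  - exact: Hhq_sec.
  - exact: Hhu_sec.
  - by [].
  - have := @cont_sec R (lr hq hu) th Hl_cont; exact.
  - exact: Hl_inc_g.
  - exact: Hl_inf.
  - exact: Hl_sup.
have lc : continuous l by case: G => _ [].
have mS t := mSup t lc.
pose Fa t := Rintegral (@lebesgue_measure R) (Sup l t) a.
pose Fb t := Rintegral (@lebesgue_measure R) (Sup l t) b.
pose Ta := Rintegral (@lebesgue_measure R) setT a.
pose Tb := Rintegral (@lebesgue_measure R) setT b.
have EN t0 : gint (fun g => pi * hq th g * Aind hq hu pi xq xu t0 th g) =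
    pi * Fa (thr pi xq xu t0).
  exact: (@gintS R a (Sup l (thr pi xq xu t0))
           (fun g => thr pi xq xu t0 < lr hq hu th g) pi (mS _) (Hhq_sec th)
           (fun g => iff_refl _)).
have ED t0 : gint (fun g => (pi * hq th g + (1 - pi) * hu th g) * Aind hq hu pi xq xu t0 th g) =
    pi * Fa (thr pi xq xu t0) + (1 - pi) * Fb (thr pi xq xu t0).
  have iab := intLin pi (1 - pi) measurableT (Hhq_sec th) (Hhu_sec th).
  rewrite /gint; transitivity (Rintegral (@lebesgue_measure R) setT
    (fun g => 1 * (pi * a g + (1 - pi) * b g) *
       (if thr pi xq xu t0 < lr hq hu th g then 1 else 0))).
    by apply: eq_Rintegral => x _; rewrite mul1r.
  rewrite (@gintS R (fun g => pi * a g + (1 - pi) * b g) (Sup l (thr pi xq xu t0))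
           (fun g => thr pi xq xu t0 < lr hq hu th g) 1 (mS _) iab
           (fun g => iff_refl _)).
  by rewrite mul1r linS //; [exact: Hhq_sec|exact: Hhu_sec].
have ET : gint (fun g => pi * hq th g + (1 - pi) * hu th g) = pi * Ta + (1 - pi) * Tb.
  by rewrite /gint linS.
have es1 t0 : s1 hq hu pi xq xu th t0 =
   pi * Fa (thr pi xq xu t0) / (pi * Fa (thr pi xq xu t0) + (1 - pi) * Fb (thr pi xq xu t0)).
  by rewrite /s1 EN ED.
have es2 t0 : s2 hq hu pi xq xu th t0 =
   (pi * Fa (thr pi xq xu t0) + (1 - pi) * Fb (thr pi xq xu t0)) / (pi * Ta + (1 - pi) * Tb).
  by rewrite /s2 ED ET.
have T0 : 0 < pi * Ta + (1 - pi) * Tb.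
  have mu0 : (0 < (@lebesgue_measure R) setT)%E.
    apply: (lt_le_trans (@muI R 0 1 ltr01)); apply: le_measure => //.
    - by rewrite inE; exact: measurable_itv.
    - by rewrite inE; exact: measurableT.
  have ta : 0 < Ta.
    apply: pos_int => //; [exact: Hhq_sec|move=> x _; exact: Hhq_pos].
  have tb : 0 < Tb.
    apply: pos_int => //; [exact: Hhu_sec|move=> x _; exact: Hhu_pos].
  move: Hpi => /andP[p0 p1]; nra.
have mono t0 t0' : - xu < t0 -> t0 < t0' -> t0' < xq ->
    s1 hq hu pi xq xu th t0 < s1 hq hu pi xq xu th t0' /\
    s2 hq hu pi xq xu th t0' < s2 hq hu pi xq xu th t0.
  move=> h1 h2 h3; have /andP[tp tt] := thr_mono Hpi h1 h2 h3.
  have [hA [hB [a1 [b1 [k1 k2]]]]] := key G tp tt.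
  rewrite !es1 !es2; split.
    exact: (alg1 Hpi hA hB a1 b1 k1 k2).
  exact: (alg2 Hpi hA hB T0).
move: Htau1 Htau2 => /andP[u1 v1] /andP[u2 v2].
apply: final => //.
case: (ltgtP tau1 tau2) Htau => [h|h|h]; last by rewrite h eqxx in Hneq.
  move=> /andP[w1 w2].
  left; split.
    have w3 : tau < xq by lra.
    by rewrite -Hs1; exact: (mono tau1 tau u1 w1 w3).1.
  have w3 : - xu < tau by lra.
  by rewrite -Hs2; exact: (mono tau tau2 w3 w2 v2).2.
move=> /andP[w1 w2].
right; split.
  have w3 : - xu < tau by lra.
  by rewrite -Hs1; exact: (mono tau tau1 w3 w2 v1).1.
have w3 : tau < xq by lra.
by rewrite -Hs2; exact: (mono tau2 tau u2 w1 w3).2.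
Qed.
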